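(* Every BL-chain $\mathbf A$ can be isomorphically embedded into a saturated BL-chain $\overline{\mathbf A}$ (identify $\mathbf A$ with its image) such that: (1) every element of $\overline{A}\setminus A$ is idempotent; and (2) if $C\subseteq A$ is such that $\bigwedge^{\mathbf A}C$ exists and is idempotent, then $\bigwedge^{\overline{\mathbf A}}C$ exists and $\bigwedge^{\mathbf A}C=\bigwedge^{\overline{\mathbf A}}C$; likewise, if $\bigvee^{\mathbf A}C$ exists and is idempotent, then $\bigvee^{\overline{\mathbf A}}C$ exists and $\bigvee^{\mathbf A}C=\bigvee^{\overline{\mathbf A}}C$.
   Context: A BL-algebra is an algebra $(A,\cdot,\to,\wedge,\vee,0,1)$ such that $(A,\wedge,\vee,0,1)$ is a bounded lattice, $(A,\cdot,1)$ is a commutative monoid, $x\cdot y\le z$ iff $x\le y\to z$, $x\wedge y=x\cdot(x\to y)$ and $(x\to y)\vee(y\to x)=1$; a BL-chain is a totally ordered BL-algebra. An element $a$ is idempotent if $a\cdot a=a$. A pair $(X,Y)$ of subsets of a BL-chain $A$ is a cut if $X\cup Y=A$, $x\le y$ for all $x\in X$, $y\in Y$, $Y$ is closed under $\cdot$, and $x\cdot y=x$ for all $x\in X$, $y\in Y$. A cut $(X,Y)$ is saturated if there is an idempotent $u\in A$ with $x\le u\le y$ for all $x\in X$, $y\in Y$. A BL-chain is saturated if every cut in it is saturated. $\bigwedge^{\mathbf A}C$, $\bigvee^{\mathbf A}C$ denote infimum and supremum computed in $\mathbf A$. *)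

(* Defs.v *)
From Stdlib Require Import Classical.

Record BLAlgebra := {
  car :> Type;
  bmul : car -> car -> car;
  bimp : car -> car -> car;
  bmeet : car -> car -> car;
  bjoin : car -> car -> car;
  bzero : car;
  bone : car;
  meet_comm : forall x y, bmeet x y = bmeet y x;
  join_comm : forall x y, bjoin x y = bjoin y x;
  meet_assoc : forall x y z, bmeet x (bmeet y z) = bmeet (bmeet x y) z;
  join_assoc : forall x y z, bjoin x (bjoin y z) = bjoin (bjoin x y) z;
  meet_absorb : forall x y, bmeet x (bjoin x y) = x;
  join_absorb : forall x y, bjoin x (bmeet x y) = x;
  meet_zero : forall x, bmeet bzero x = bzero;
  meet_one : forall x, bmeet bone x = x;
  mul_comm : forall x y, bmul x y = bmul y x;
  mul_assoc : forall x y z, bmul x (bmul y z) = bmul (bmul x y) z;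
  mul_one : forall x, bmul x bone = x;
  (* residuation, w.r.t. the lattice order x <= y :<-> x /\ y = x *)
  residuation : forall x y z,
      bmeet (bmul x y) z = bmul x y <-> bmeet x (bimp y z) = x;
  divisibility : forall x y, bmeet x y = bmul x (bimp x y);
  prelinearity : forall x y, bjoin (bimp x y) (bimp y x) = bone
}.

Section Notions.
Variable A : BLAlgebra.

Definition ble (x y : A) : Prop := bmeet A x y = x.

Definition is_chain : Prop := forall x y : A, ble x y \/ ble y x.

Definition idempotent (a : A) : Prop := bmul A a a = a.

Definition is_cut (X Y : A -> Prop) : Prop :=
  (forall a : A, X a \/ Y a) /\
  (forall x y : A, X x -> Y y -> ble x y) /\
  (forall y1 y2 : A, Y y1 -> Y y2 -> Y (bmul A y1 y2)) /\
  (forall x y : A, X x -> Y y -> bmul A x y = x).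

Definition saturated_cut (X Y : A -> Prop) : Prop :=
  exists u : A, idempotent u /\
    (forall x, X x -> ble x u) /\ (forall y, Y y -> ble u y).

Definition saturated : Prop :=
  forall X Y : A -> Prop, is_cut X Y -> saturated_cut X Y.

Definition is_inf (C : A -> Prop) (m : A) : Prop :=
  (forall c, C c -> ble m c) /\ (forall l, (forall c, C c -> ble l c) -> ble l m).
Definition is_sup (C : A -> Prop) (m : A) : Prop :=
  (forall c, C c -> ble c m) /\ (forall u, (forall c, C c -> ble c u) -> ble m u).
End Notions.

Definition BL_embedding (A B : BLAlgebra) (f : A -> B) : Prop :=
  (forall x y, f x = f y -> x = y) /\
  (forall x y, f (bmul A x y) = bmul B (f x) (f y)) /\
  (forall x y, f (bimp A x y) = bimp B (f x) (f y)) /\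
  (forall x y, f (bmeet A x y) = bmeet B (f x) (f y)) /\
  (forall x y, f (bjoin A x y) = bjoin B (f x) (f y)) /\
  f (bzero A) = bzero B /\ f (bone A) = bone B.

(* Main.v *)
Require Import Defs.
From Stdlib Require Import Classical ClassicalEpsilon FunctionalExtensionality PropExtensionality ProofIrrelevance.

Section Constr.
Variable A : BLAlgebra.
Hypothesis HA : is_chain A.

Lemma Ale_refl (x : A) : ble A x x.
Proof. unfold ble. pose proof (meet_absorb A x (bmeet A x x)) as H. rewrite join_absorb in H. exact H. Qed.
Lemma Ale_antisym (x y : A) : ble A x y -> ble A y x -> x = y.
Proof. unfold ble; intros H1 H2. transitivity (bmeet A x y). symmetry; exact H1. rewrite meet_comm; exact H2. Qed.
Lemma Ale_trans (x y z : A) : ble A x y -> ble A y z -> ble A x z.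
Proof. unfold ble; intros H1 H2. rewrite <- H1, <- meet_assoc, H2. reflexivity. Qed.
Lemma Ale_one (x : A) : ble A x (bone A).
Proof. unfold ble; rewrite meet_comm; apply meet_one. Qed.
Lemma Ale_zero (x : A) : ble A (bzero A) x.
Proof. apply meet_zero. Qed.
Lemma Ares (x y z : A) : ble A (bmul A x y) z <-> ble A x (bimp A y z).
Proof. apply residuation. Qed.
Lemma Amul_mono (x y z : A) : ble A x y -> ble A (bmul A x z) (bmul A y z).
Proof. intros H. apply Ares. apply Ale_trans with y; auto. apply Ares. apply Ale_refl. Qed.
Lemma Amul_le_l (x y : A) : ble A (bmul A x y) x.
Proof. assert (H := Amul_mono y (bone A) x (Ale_one y)).
  rewrite (mul_comm A (bone A) x), mul_one in H. rewrite mul_comm; exact H. Qed.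
Lemma Amul_le_r (x y : A) : ble A (bmul A x y) y.
Proof. rewrite mul_comm; apply Amul_le_l. Qed.
Lemma Aimp_one (x y : A) : ble A x y -> bimp A x y = bone A.
Proof. intros. apply Ale_antisym. apply Ale_one. apply Ares. rewrite mul_comm, mul_one. auto. Qed.
Lemma Aimp_ge (x y : A) : ble A y (bimp A x y).
Proof. apply Ares. apply Amul_le_l. Qed.
Lemma Ameet_r (x y : A) : ble A y x -> bmeet A x y = y.
Proof. intros H; rewrite meet_comm; exact H. Qed.
Lemma Ajoin_r (x y : A) : ble A x y -> bjoin A x y = y.
Proof. intros H. unfold ble in H. rewrite join_comm. rewrite <- H. rewrite meet_comm. apply join_absorb. Qed.
Lemma Ajoin_l (x y : A) : ble A y x -> bjoin A x y = x.
Proof. rewrite join_comm; apply Ajoin_r. Qed.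

Definition ncut (X : A -> Prop) := is_cut A X (fun a => ~ X a) /\ ~ saturated_cut A X (fun a => ~ X a).
Record NC := mkNC { ncX : A -> Prop; ncP : ncut ncX }.

Lemma nc_le (V : NC) a b : ncX V a -> ~ ncX V b -> ble A a b.
Proof. destruct V as [X HX]; simpl; destruct HX as [[_ [H _]] _]; intros; eauto. Qed.
Lemma nc_mulY (V : NC) a b : ~ ncX V a -> ~ ncX V b -> ~ ncX V (bmul A a b).
Proof. destruct V as [X HX]; simpl; destruct HX as [[_ [_ [H _]]] _]; intros; eauto. Qed.
Lemma nc_mulX (V : NC) a b : ncX V a -> ~ ncX V b -> bmul A a b = a.
Proof. destruct V as [X HX]; simpl; destruct HX as [[_ [_ [_ H]]] _]; intros; eauto. Qed.
Lemma nc_nsat (V : NC) : ~ saturated_cut A (ncX V) (fun a => ~ ncX V a).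
Proof. destruct V as [X HX]; simpl; destruct HX as [_ H]; eauto. Qed.
Lemma nc_down (V : NC) b c : ncX V b -> ble A c b -> ncX V c.
Proof. intros. destruct (classic (ncX V c)); auto. exfalso.
  assert (b = c) by (apply Ale_antisym; auto; apply nc_le with V; auto). subst; auto. Qed.
Lemma nc_up (V : NC) b c : ~ ncX V b -> ble A b c -> ~ ncX V c.
Proof. intros H1 H2 H3. apply H1. eapply nc_down; eauto. Qed.
Lemma nc_one (V : NC) : ~ ncX V (bone A).
Proof. intros H. apply (nc_nsat V). exists (bone A). split. unfold idempotent; apply mul_one.
  split. intros; apply Ale_one. intros y Hy; apply nc_le with V; auto. Qed.
Lemma nc_zero (V : NC) : ncX V (bzero A).
Proof. destruct (classic (ncX V (bzero A))) as [H|H]; auto; exfalso. apply (nc_nsat V).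
  exists (bzero A). split. unfold idempotent. apply Ale_antisym. apply Amul_le_l. apply Ale_zero.
  split. intros x Hx; apply nc_le with V; auto. intros; apply Ale_zero. Qed.
Lemma nc_ext (V W : NC) : (forall a, ncX V a <-> ncX W a) -> V = W.
Proof. destruct V as [X p], W as [Y q]; simpl; intros H.
  assert (X = Y) by (extensionality a; apply propositional_extensionality; auto). subst. f_equal. apply proof_irrelevance. Qed.

Definition T := (car A + NC)%type.
Definition lt (x y : T) : Prop := match x, y with
| inl a, inl b => ble A a b /\ a <> b
| inl a, inr V => ncX V a
| inr V, inl b => ~ ncX V b
| inr V, inr W => exists a, ~ ncX V a /\ ncX W a end.

Lemma lt_irrefl x : ~ lt x x.
Proof. destruct x; simpl. tauto. intros [a [H1 H2]]; auto. Qed.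

Lemma lt_trans x y z : lt x y -> lt y z -> lt x z.
Proof. destruct x as [a|V], y as [b|W], z as [c|Z]; simpl; intros H1 H2.
- destruct H1, H2. split. eapply Ale_trans; eauto. intro; subst. apply H0. apply Ale_antisym; auto.
- destruct H1. eapply nc_down; eauto.
- split. eapply nc_le; eauto. intro; subst; auto.
- destruct H2 as [c [? ?]]. eapply nc_down; eauto. eapply nc_le; eauto.
- destruct H2. eapply nc_up; eauto.
- exists b; auto.
- destruct H1 as [a [? ?]]. eapply nc_up; eauto. eapply nc_le; eauto.
- destruct H1 as [a [? ?]], H2 as [d [? ?]]. exists d; split; auto. eapply nc_up; eauto. eapply nc_le; eauto.
Qed.

Lemma lt_tri x y : lt x y \/ x = y \/ lt y x.
Proof. destruct x as [a|V], y as [b|W]; simpl.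
- destruct (classic (a = b)). subst; auto. destruct (HA a b); [left|right;right]; split; auto.
- destruct (classic (ncX W a)); auto.
- destruct (classic (ncX V b)); auto.
- destruct (classic (exists a, ~ ncX V a /\ ncX W a)); auto.
  destruct (classic (exists a, ~ ncX W a /\ ncX V a)); auto.
  right; left. f_equal. apply nc_ext. intro a. split; intro Ha; apply NNPP; intro Hb; eauto.
Qed.

Definition le x y := lt x y \/ x = y.
Lemma le_refl x : le x x. Proof. right; auto. Qed.
Lemma le_trans x y z : le x y -> le y z -> le x z.
Proof. intros [H1|H1] [H2|H2]; subst; unfold le; eauto using lt_trans. Qed.
Lemma le_antisym x y : le x y -> le y x -> x = y.
Proof. intros [H1|H1] [H2|H2]; auto. exfalso; eapply lt_irrefl, lt_trans; eauto. Qed.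
Lemma nle_lt x y : ~ le x y -> lt y x.
Proof. intros H. destruct (lt_tri x y) as [?|[?|?]]; auto; exfalso; apply H; unfold le; auto. Qed.
Lemma lt_nle x y : lt x y -> ~ le y x.
Proof. intros H [H1|H1]; subst. eapply lt_irrefl, lt_trans; eauto. eapply lt_irrefl; eauto. Qed.
Lemma lt_le x y : lt x y -> le x y. Proof. left; auto. Qed.
Lemma le_total x y : le x y \/ le y x.
Proof. destruct (classic (le x y)); auto. right; apply lt_le, nle_lt; auto. Qed.

Definition dec := excluded_middle_informative.
Definition meet (x y : T) : T := if dec (le x y) then x else y.
Definition join (x y : T) : T := if dec (le x y) then y else x.
Definition one : T := inl (bone A).
Definition zero : T := inl (bzero A).
Definition gimp (x y : T) : T := if dec (le x y) then one else y.
Definition mul (x y : T) : T := match x, y with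
  | inl a, inl b => inl (bmul A a b) | _, _ => meet x y end.
Definition imp (x y : T) : T := match x, y with
  | inl a, inl b => inl (bimp A a b) | _, _ => gimp x y end.

Lemma meet_l x y : le x y -> meet x y = x.
Proof. unfold meet; destruct dec; auto; contradiction. Qed.
Lemma meet_r x y : le y x -> meet x y = y.
Proof. unfold meet; destruct dec; auto. intros; apply le_antisym; auto. Qed.
Lemma join_r x y : le x y -> join x y = y.
Proof. unfold join; destruct dec; auto; contradiction. Qed.
Lemma join_l x y : le y x -> join x y = x.
Proof. unfold join; destruct dec; auto. intros; apply le_antisym; auto. Qed.
Lemma bleE x y : meet x y = x <-> le x y.
Proof. split. unfold meet; destruct dec; auto. intro; subst; apply le_refl. apply meet_l. Qed.
Lemma le_inl a b : le (inl a) (inl b) <-> ble A a b.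
Proof. split. intros [[H _]|H]; auto. inversion H; subst; apply Ale_refl.
  intros H. destruct (classic (a = b)). subst; apply le_refl. left; split; auto. Qed.
Lemma meet_inl a b : meet (inl a) (inl b) = inl (bmeet A a b).
Proof. destruct (HA a b) as [H|H].
  rewrite meet_l by (apply le_inl; auto). rewrite H; auto.
  rewrite meet_r by (apply le_inl; auto). rewrite Ameet_r; auto. Qed.
Lemma join_inl a b : join (inl a) (inl b) = inl (bjoin A a b).
Proof. destruct (HA a b) as [H|H].
  rewrite join_r by (apply le_inl; auto). rewrite Ajoin_r; auto.
  rewrite join_l by (apply le_inl; auto). rewrite Ajoin_l; auto. Qed.
Lemma le_one x : le x one.
Proof. destruct x as [a|V]. apply le_inl, Ale_one. left; simpl; apply nc_one. Qed.
Lemma le_zero x : le zero x.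
Proof. destruct x as [a|V]. apply le_inl, Ale_zero. left; simpl; apply nc_zero. Qed.

Ltac dsplit := repeat match goal with |- context [dec ?P] => destruct (dec P) | H : context [dec ?P] |- _ => destruct (dec P) end.
Ltac addle := repeat match goal with H : ~ le ?x ?y |- _ =>
   match goal with _ : le y x |- _ => fail 1 | _ => assert (le y x) by (apply lt_le, nle_lt; exact H) end end.
Ltac fin := addle; first [reflexivity
  | (apply le_antisym; eauto using le_trans, le_refl, le_one, le_zero)
  | (exfalso; match goal with H : ~ le ?x ?y |- _ => apply H; eauto using le_trans, le_refl, le_one, le_zero end)].
Ltac brute := unfold meet, join, gimp; dsplit; try fin.

Lemma Bmeet_comm x y : meet x y = meet y x. Proof. brute. Qed.
Lemma Bjoin_comm x y : join x y = join y x. Proof. brute. Qed.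
Lemma Bmeet_assoc x y z : meet x (meet y z) = meet (meet x y) z.
Proof. brute. Qed.
Lemma Bjoin_assoc x y z : join x (join y z) = join (join x y) z. Proof. brute. Qed.
Lemma Bmeet_absorb x y : meet x (join x y) = x. Proof. brute. Qed.
Lemma Bjoin_absorb x y : join x (meet x y) = x. Proof. brute. Qed.
Lemma Bmeet_zero x : meet zero x = zero. Proof. apply meet_l, le_zero. Qed.
Lemma Bmeet_one x : meet one x = x. Proof. apply meet_r, le_one. Qed.

Lemma mul_new x y : (exists V, x = inr V \/ y = inr V) -> mul x y = meet x y.
Proof. intros [V [->| ->]]; destruct x || destruct y; reflexivity. Qed.
Lemma imp_new x y : (exists V, x = inr V \/ y = inr V) -> imp x y = gimp x y.
Proof. intros [V [->| ->]]; destruct x || destruct y; reflexivity. Qed.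

Lemma Bmul_comm x y : mul x y = mul y x.
Proof. destruct x as [a|V], y as [b|W]; simpl; try rewrite mul_comm; try reflexivity; apply Bmeet_comm. Qed.
Lemma Bmul_one x : mul x one = x.
Proof. destruct x as [a|V]; simpl. rewrite mul_one; auto. apply meet_l, le_one. Qed.

Lemma keyL a b V : mul (inl a) (meet (inl b) (inr V)) = meet (inl (bmul A a b)) (inr V).
Proof. destruct (classic (ncX V b)) as [Hb|Hb].
- rewrite meet_l by (left; exact Hb). simpl. rewrite meet_l; auto. left; simpl.
  eapply nc_down; eauto. apply Amul_le_r.
- rewrite meet_r by (left; exact Hb). simpl. destruct (classic (ncX V a)) as [Ha|Ha].
  + rewrite (nc_mulX V a b Ha Hb). auto.
  + rewrite !meet_r; auto; left; simpl; auto. apply nc_mulY; auto.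
Qed.

Ltac mn := repeat match goal with
  | |- context [mul (inr ?V) ?y] => rewrite (mul_new (inr V) y) by (exists V; auto)
  | |- context [mul ?x (inr ?V)] => rewrite (mul_new x (inr V)) by (exists V; auto) end.
Lemma meet_cases x y : meet x y = x \/ meet x y = y.
Proof. unfold meet; destruct dec; auto. Qed.
Ltac mbrute := repeat match goal with |- context [meet ?x ?y] =>
   let H := fresh in destruct (meet_cases x y) as [H|H]; rewrite H in *; mn end.

Lemma Bmul_assoc x y z : mul x (mul y z) = mul (mul x y) z.
Proof. destruct x as [a|U], y as [b|V], z as [c|W].
- simpl; rewrite mul_assoc; auto.
- rewrite (mul_new (inl b) (inr W)) by (exists W; auto). rewrite keyL. reflexivity.
- rewrite (mul_new (inr V) (inl c)) by (exists V; auto).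
  rewrite (mul_new (inl a) (inr V)) by (exists V; auto).
  rewrite Bmeet_comm, keyL, Bmul_comm, keyL, mul_comm. reflexivity.
- mn. unfold meet; dsplit; mn; unfold meet; dsplit; try fin.
- rewrite (mul_new (inr U) (inl b)) by (exists U; auto). change (mul (inl b) (inl c)) with (@inl (car A) NC (bmul A b c)).
  rewrite (mul_new (inr U) (inl (bmul A b c))) by (exists U; auto).
  rewrite Bmul_comm, (Bmeet_comm (inr U) (inl b)), keyL, mul_comm. apply Bmeet_comm.
- mn. unfold meet; dsplit; mn; unfold meet; dsplit; try fin.
- mn. unfold meet; dsplit; mn; unfold meet; dsplit; try fin.
- mn. unfold meet; dsplit; mn; unfold meet; dsplit; try fin.
Qed.
Ltac lfin := addle; first [ assumption | apply le_one | apply le_zero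
  | (eauto using le_trans, le_refl, le_one, le_zero)
  | (exfalso; match goal with H : ~ le ?x ?y |- _ => apply H; eauto using le_trans, le_refl, le_one, le_zero end)].

Lemma godel x y z : le (meet x y) z <-> le x (gimp y z).
Proof. unfold meet, gimp; dsplit; split; intros; try lfin.
  exfalso; apply n0; assumption. Qed.

Lemma meet_le_l x y : le (meet x y) x.
Proof. unfold meet; dsplit; lfin. Qed.
Lemma meet_le_r x y : le (meet x y) y.
Proof. unfold meet; dsplit; lfin. Qed.
Lemma le_inr_inl V a : le (inr V) (inl a) <-> ~ ncX V a.
Proof. split. intros [H|H]; [exact H| discriminate]. intros; left; exact H. Qed.
Lemma le_inl_inr V a : le (inl a) (inr V) <-> ncX V a.
Proof. split. intros [H|H]; [exact H| discriminate]. intros; left; exact H. Qed.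

Lemma res1 V b c : le (meet (inr V) (inl b)) (inl c) <-> le (inr V) (inl (bimp A b c)).
Proof. destruct (classic (ble A b c)) as [H|H].
- rewrite Aimp_one by auto. split; intros; [apply le_one|].
  apply le_trans with (inl b). apply meet_le_r. apply le_inl; auto.
- assert (Hn : ~ le (inl b) (inl c)) by (rewrite le_inl; auto).
  split; intros H1.
  + unfold meet in H1; destruct dec as [H2|H2].
    * eapply le_trans; [exact H1|]. apply le_inl, Aimp_ge.
    * contradiction.
  + apply le_trans with (inr V); [apply meet_le_l|].
    apply le_inr_inl in H1. apply le_inr_inl. intro Hc.
    set (d := bimp A b c) in *.
    assert (Hdb : ble A (bmul A d b) c) by (apply Ares, Ale_refl).
    destruct (classic (ncX V b)) as [Hb|Hb].
    * apply H. rewrite <- (nc_mulX V b d Hb H1). rewrite mul_comm; auto.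
    * apply (nc_mulY V d b H1 Hb). eapply nc_down; eauto.
Qed.

Lemma res2 a b V : le (inl (bmul A a b)) (inr V) <-> le (inl a) (gimp (inl b) (inr V)).
Proof. rewrite le_inl_inr. unfold gimp; destruct dec as [H|H].
- split; intros; [apply le_one|]. rewrite le_inl_inr in H. eapply nc_down; eauto. apply Amul_le_r.
- rewrite le_inl_inr. rewrite le_inl_inr in H. split; intros H1.
  + apply NNPP; intro Ha. exact (nc_mulY V a b Ha H H1).
  + rewrite (nc_mulX V a b H1 H). auto.
Qed.

Lemma Bres x y z : meet (mul x y) z = mul x y <-> meet x (imp y z) = x.
Proof. rewrite !bleE. destruct x as [a|U], y as [b|V], z as [c|W].
- simpl. rewrite !le_inl. apply Ares.
- simpl. apply res2.
- rewrite mul_new, imp_new by (exists V; auto). apply godel.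
- rewrite mul_new, imp_new by (exists V; auto). apply godel.
- rewrite mul_new by (exists U; auto). simpl. apply res1.
- rewrite mul_new by (exists U; auto). rewrite imp_new by (exists W; auto). apply godel.
- rewrite mul_new, imp_new by (exists V; auto). apply godel.
- rewrite mul_new, imp_new by (exists V; auto). apply godel.
Qed.

Lemma Bdiv x y : meet x y = mul x (imp x y).
Proof. destruct x as [a|U], y as [b|V].
- rewrite meet_inl. simpl. rewrite divisibility; auto.
- rewrite imp_new by (exists V; auto). unfold gimp; destruct dec.
  + rewrite Bmul_one, meet_l; auto.
  + rewrite mul_new by (exists V; auto). try reflexivity.
- rewrite imp_new by (exists U; auto). unfold gimp; destruct dec.
  + rewrite Bmul_one, meet_l; auto.
  + rewrite mul_new by (exists U; auto). try reflexivity.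
- rewrite imp_new by (exists U; auto). unfold gimp; destruct dec.
  + rewrite Bmul_one, meet_l; auto.
  + rewrite mul_new by (exists U; auto). try reflexivity.
Qed.

Lemma Bprelin x y : join (imp x y) (imp y x) = one.
Proof. destruct x as [a|U], y as [b|V].
- simpl. rewrite join_inl, prelinearity. reflexivity.
- rewrite !imp_new by (exists V; auto). unfold gimp; dsplit; try apply join_l, le_one; try apply join_r, le_one.
  destruct (le_total (inl a) (inr V)); contradiction.
- rewrite !imp_new by (exists U; auto). unfold gimp; dsplit; try apply join_l, le_one; try apply join_r, le_one.
  destruct (le_total (inr U) (inl b)); contradiction.
- rewrite !imp_new by (exists U; auto). unfold gimp; dsplit; try apply join_l, le_one; try apply join_r, le_one.
  destruct (le_total (inr U) (inr V)); contradiction.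
Qed.
Definition Abar : BLAlgebra := {| car := T; bmul := mul; bimp := imp; bmeet := meet; bjoin := join;
  bzero := zero; bone := one;
  meet_comm := Bmeet_comm; join_comm := Bjoin_comm; meet_assoc := Bmeet_assoc; join_assoc := Bjoin_assoc;
  meet_absorb := Bmeet_absorb; join_absorb := Bjoin_absorb; meet_zero := Bmeet_zero; meet_one := Bmeet_one;
  mul_comm := Bmul_comm; mul_assoc := Bmul_assoc; mul_one := Bmul_one; residuation := Bres;
  divisibility := Bdiv; prelinearity := Bprelin |}.

Lemma Bble (x y : Abar) : ble Abar x y <-> le x y.
Proof. unfold ble; simpl. apply bleE. Qed.

Lemma Bchain : is_chain Abar.
Proof. intros x y. destruct (le_total x y); [left|right]; apply Bble; auto. Qed.

Lemma Bemb : BL_embedding A Abar (fun a => inl a).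
Proof. repeat split; simpl; intros; auto.
- inversion H; auto.
- symmetry; apply meet_inl.
- symmetry; apply join_inl.
Qed.

Lemma Bidem (b : Abar) : (forall a : A, inl a <> b) -> idempotent Abar b.
Proof. intros H. destruct b as [a|V]. exfalso; apply (H a); auto.
  unfold idempotent; simpl. apply meet_l, le_refl. Qed.

Lemma Binf (C : A -> Prop) (m : A) : is_inf A C m -> idempotent A m ->
  is_inf Abar (fun b => exists c, C c /\ inl c = b) (inl m).
Proof. intros [H1 H2] Hm. split.
- intros b [c [Hc <-]]. apply Bble, le_inl, H1; auto.
- intros l Hl. apply Bble. destruct l as [a|V].
  + apply le_inl, H2. intros c Hc. apply le_inl, Bble, Hl. exists c; auto.
  + apply le_inr_inl. intro Vm. apply (nc_nsat V). exists m. split; auto. split.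
    * intros x Vx. apply H2. intros c Hc. assert (Hlc := Hl (inl c) (ex_intro _ c (conj Hc eq_refl))).
      apply Bble, le_inr_inl in Hlc. eapply nc_le; eauto.
    * intros y Hy. eapply nc_le; eauto.
Qed.

Lemma Bsup (C : A -> Prop) (m : A) : is_sup A C m -> idempotent A m ->
  is_sup Abar (fun b => exists c, C c /\ inl c = b) (inl m).
Proof. intros [H1 H2] Hm. split.
- intros b [c [Hc <-]]. apply Bble, le_inl, H1; auto.
- intros l Hl. apply Bble. destruct l as [a|V].
  + apply le_inl, H2. intros c Hc. apply le_inl, Bble, Hl. exists c; auto.
  + apply le_inl_inr. apply NNPP; intro nVm. apply (nc_nsat V). exists m. split; auto. split.
    * intros x Vx. eapply nc_le; eauto.
    * intros y Hy. apply H2. intros c Hc. assert (Hlc := Hl (inl c) (ex_intro _ c (conj Hc eq_refl))).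
      apply Bble, le_inl_inr in Hlc. eapply nc_le; eauto.
Qed.

Lemma Bsat : saturated Abar.
Proof. intros X Y [Hu [Hle [Hcl Hmx]]].
  assert (Hle' : forall x y, X x -> Y y -> le x y) by (intros; apply Bble; auto).
  clear Hle.
  destruct (classic (exists w, X w /\ Y w)) as [[w [Xw Yw]]|Hdisj].
  { exists w. split. unfold idempotent; apply Hmx; auto. split; intros; apply Bble; apply Hle'; auto. }
  assert (HY : forall x, ~ X x -> Y x) by (intros x Hx; destruct (Hu x); tauto).
  assert (HX : forall x, Y x -> ~ X x) by (intros x Hy Hx; apply Hdisj; eauto).
  set (Xa := fun a : A => X (inl a)).
  assert (Hcut : is_cut A Xa (fun a => ~ Xa a)).
  { split. intros; apply classic. split.
    intros a b Ha Hb. apply le_inl. apply Hle'; auto.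
    split. intros b1 b2 n1 n2 X12. apply (HX (inl (bmul A b1 b2))); auto.
      apply (Hcl (inl b1) (inl b2)); auto.
    intros a b Ha Hb. assert (E := Hmx (inl a) (inl b) Ha (HY _ Hb)). simpl in E. injection E; auto. }
  destruct (classic (saturated_cut A Xa (fun a => ~ Xa a))) as [[u [Hid [H1 H2]]]|Hns].
  - exists (inl u). split. unfold idempotent in *; simpl. rewrite Hid; auto.
    destruct (classic (Xa u)) as [Xu|nXu].
    + split; intros x Hx; apply Bble.
      * destruct x as [b|V]. apply le_inl, H1; auto.
        apply le_inr_inl. intro Vu.
        destruct (classic (exists c, ncX V c /\ ~ Xa c)) as [[c [Vc nXc]]|Hno].
        -- assert (E := Hle' _ _ Hx (HY (inl c) nXc)). apply le_inr_inl in E. auto.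
        -- apply (nc_nsat V). exists u. split; auto. split.
           intros z Vz. apply H1. apply NNPP; intro; eauto.
           intros y Vy. eapply nc_le; eauto.
      * apply Hle'; auto.
    + assert (Yu : Y (inl u)) by (apply HY; auto).
      split; intros x Hx; apply Bble.
      * apply Hle'; auto.
      * destruct x as [b|V]. apply le_inl, H2. apply HX; auto.
        apply le_inl_inr. apply NNPP; intro nVu.
        destruct (classic (exists c, Xa c /\ ~ ncX V c)) as [[c [Xc nVc]]|Hno].
        -- assert (E := Hle' _ _ Xc Hx). apply le_inl_inr in E. auto.
        -- apply (nc_nsat V). exists u. split; auto. split.
           intros z Vz. eapply nc_le; eauto.
           intros y Vy. apply H2. intro Xy. apply Hno; eauto.
  - set (V := mkNC Xa (conj Hcut Hns)).
    exists (inr V). split. unfold idempotent; simpl. apply meet_l, le_refl.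
    destruct (Hu (inr V)) as [XV|YV].
    + split; intros x Hx; apply Bble.
      * destruct x as [b|W]. apply le_inl_inr. exact Hx.
        apply NNPP; intro E. apply nle_lt in E. destruct E as [a [nXa Wa]].
        assert (E := Hle' _ _ Hx (HY (inl a) nXa)). apply le_inr_inl in E. auto.
      * apply Hle'; auto.
    + split; intros x Hx; apply Bble.
      * apply Hle'; auto.
      * destruct x as [b|W]. apply le_inr_inl. simpl. apply HX; auto.
        apply NNPP; intro E. apply nle_lt in E. destruct E as [a [nWa Xa']].
        assert (E := Hle' _ _ Xa' Hx). apply le_inl_inr in E. auto.
Qed.

End Constr.

Theorem mainTheorem9 (A : BLAlgebra) (HA : is_chain A) :
  exists (Abar : BLAlgebra) (f : A -> Abar),
    is_chain Abar /\ saturated Abar /\ BL_embedding A Abar f /\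
    (* (1) elements outside the image of A are idempotent *)
    (forall b : Abar, (forall a : A, f a <> b) -> idempotent Abar b) /\
    (* (2) idempotent infima and suprema are preserved *)
    (forall (C : A -> Prop) (m : A), is_inf A C m -> idempotent A m ->
        is_inf Abar (fun b => exists c, C c /\ f c = b) (f m)) /\
    (forall (C : A -> Prop) (m : A), is_sup A C m -> idempotent A m ->
        is_sup Abar (fun b => exists c, C c /\ f c = b) (f m)).
Proof.
  exists (Abar A HA), (fun a => inl a).
  split. apply Bchain. split. apply Bsat. split. apply Bemb. split. apply Bidem.
  split. apply Binf. apply Bsup.
Qed.
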